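(* Let $n\geq 3$ and $R=K[x_1,\ldots,x_n]$ a polynomial ring over a field $K$. Then the ideal $L=(x_ix_{i+1}x_{i+2} : i=1,\ldots,n-2)\subset R$ (the path ideal of paths of length two in the path graph on $x_1,\ldots,x_n$) is normally torsion-free.
   Context: An ideal $I$ in $R$ is normally torsion-free if $\mathrm{Ass}(R/I^k)\subseteq\mathrm{Ass}(R/I)$ for all $k\geq 1$, where $\mathrm{Ass}$ denotes the set of associated primes. *)

(* Defs.v *)
From HB Require Import structures.
From mathcomp Require Import all_boot all_order all_algebra.
From mathcomp Require Import mpoly.
Set Implicit Arguments. Unset Strict Implicit. Unset Printing Implicit Defensive.
Import GRing.Theory.
Local Open Scope ring_scope.

Definition ideal_span (R : comNzRingType) (S : R -> Prop) : R -> Prop :=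
  fun f => exists l : seq (R * R),
    (forall p, p \in l -> S p.2) /\ f = \sum_(p <- l) p.1 * p.2.

Definition ideal_pow (R : comNzRingType) (I : R -> Prop) (k : nat) : R -> Prop :=
  ideal_span (fun x => exists s : seq R,
    size s = k /\ (forall a, a \in s -> I a) /\ x = \prod_(a <- s) a).

Definition is_ideal (R : comNzRingType) (P : R -> Prop) : Prop :=
  P 0 /\ (forall a b, P a -> P b -> P (a + b)) /\ (forall r a, P a -> P (r * a)).

Definition prime_ideal (R : comNzRingType) (P : R -> Prop) : Prop :=
  is_ideal P /\ ~ P 1 /\ (forall a b, P (a * b) -> P a \/ P b).

(* P is an associated prime of R/I: P is prime and P = (I : f) for some f in R. *)
Definition Ass (R : comNzRingType) (I : R -> Prop) (P : R -> Prop) : Prop :=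
  prime_ideal P /\ exists f : R, forall g, P g <-> I (g * f).

Definition normally_torsion_free (R : comNzRingType) (I : R -> Prop) : Prop :=
  forall k : nat, (1 <= k)%N -> forall P, Ass (ideal_pow I k) P -> Ass I P.

(* The path ideal of paths of length two on x_1,...,x_n (0-indexed here):
   generated by x_i x_{i+1} x_{i+2}. *)
Definition path2_ideal (K : fieldType) (n : nat) : {mpoly K[n]} -> Prop :=
  ideal_span (fun g => exists i j l : 'I_n,
    val j = (val i).+1 /\ val l = (val i).+2 /\ g = 'X_i * 'X_j * 'X_l).
Arguments path2_ideal K n : clear implicits.

(* Main.v *)
Require Import Defs.
From mathcomp Require Import all_boot all_order all_algebra.
From mathcomp Require Import mpoly.
From Stdlib Require Import Classical.
From mathcomp Require Import ring zify.
Set Implicit Arguments. Unset Strict Implicit. Unset Printing Implicit Defensive.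
Import GRing.Theory.


Section Ideals.
Local Open Scope ring_scope.
Variable R : comNzRingType.

Lemma span_ideal (S : R -> Prop) : is_ideal (ideal_span S).
Proof.
split; first by exists [::]; rewrite big_nil.
split.
  move=> a b [la [Ha ->]] [lb [Hb ->]]; exists (la ++ lb); split.
    by move=> p; rewrite mem_cat => /orP[/Ha|/Hb].
  by rewrite big_cat.
move=> r a [l [Hl ->]]; exists [seq (r * p.1, p.2) | p <- l]; split.
  by move=> p /mapP [q /Hl Hq ->].
by rewrite big_map mulr_sumr; apply: eq_bigr => p _; rewrite mulrA.
Qed.

Lemma span_gen (S : R -> Prop) x : S x -> ideal_span S x.
Proof.
move=> Sx; exists [:: (1, x)]; split; first by move=> p; rewrite inE => /eqP ->.
by rewrite big_seq1 mul1r.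
Qed.

Lemma span_sub (S J : R -> Prop) : is_ideal J -> (forall x, S x -> J x) ->
  forall x, ideal_span S x -> J x.
Proof.
move=> [J0 [JD JM]] SJ x [l [Hl ->]]; elim: l Hl => [|p l IH] Hl.
  by rewrite big_nil.
rewrite big_cons; apply: JD; first by apply: JM; apply: SJ; apply: Hl; rewrite inE eqxx.
by apply: IH => q Hq; apply: Hl; rewrite inE Hq orbT.
Qed.

Lemma ideal_sum (J : R -> Prop) (I : eqType) (r : seq I) (F : I -> R) :
  is_ideal J -> (forall i, i \in r -> J (F i)) -> J (\sum_(i <- r) F i).
Proof.
move=> [J0 [JD JM]]; elim: r => [|i r IH] H; first by rewrite big_nil.
rewrite big_cons; apply: JD; first by apply: H; rewrite inE eqxx.
by apply: IH => j Hj; apply: H; rewrite inE Hj orbT.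
Qed.

Lemma ideal_mulr (J : R -> Prop) a r : is_ideal J -> J a -> J (a * r).
Proof. by move=> [_ [_ JM]] Ja; rewrite mulrC; apply: JM. Qed.

Lemma ideal_opp (J : R -> Prop) a : is_ideal J -> J a -> J (- a).
Proof. by move=> [_ [_ JM]] Ja; rewrite -mulN1r; apply: JM. Qed.

Lemma prime_pow (P : R -> Prop) x k : prime_ideal P -> P (x ^+ k) -> P x.
Proof.
move=> [_ [P1 Pm]]; elim: k => [|k IH]; first by rewrite expr0.
by rewrite exprS => /Pm [//|/IH].
Qed.

Lemma pow_take (I : R -> Prop) k (s : seq R) : (k <= size s)%N ->
  (forall a, a \in s -> I a) -> ideal_pow I k (\prod_(a <- s) a).
Proof.
move=> ks Hs; rewrite -(cat_take_drop k s) big_cat /= mulrC.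
apply: (proj2 (proj2 (span_ideal _))); apply: span_gen.
exists (take k s); split; first by rewrite size_take_min; apply/minn_idPl.
split=> // a Ha; apply: Hs; exact: mem_take Ha.
Qed.

End Ideals.


Section Mono.
Local Open Scope ring_scope.
Variable K : fieldType.
Variable n : nat.
Local Notation R := {mpoly K[n]}.
Implicit Types (C : {set 'I_n}) (j : 'I_n) (m : 'X_{1..n}).

Definition degC (C : {set 'I_n}) (m : 'X_{1..n}) : nat := (\sum_(j in C) m j)%N.

Definition W (C : {set 'I_n}) (d : nat) (h : R) : Prop :=
  forall m, h@_m != 0 -> (d <= degC C m)%N.

Lemma degCD C m1 m2 : degC C (m1 + m2)%MM = (degC C m1 + degC C m2)%N.
Proof. by rewrite /degC -big_split; apply: eq_bigr => j _; rewrite mnmDE. Qed.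

Lemma degC_sub (C C' : {set 'I_n}) (m : 'X_{1..n}) : C' \subset C -> (degC C' m <= degC C m)%N.
Proof.
move=> sub; rewrite /degC [X in (_ <= X)%N](bigID (fun j => j \in C')) /=.
have -> : (\sum_(j in C') m j = \sum_(j in C | j \in C') m j)%N.
  apply: eq_bigl => j; case: (boolP (j \in C')) => H; rewrite ?andbF ?andbT //.
  by rewrite (subsetP sub).
exact: leq_addr.
Qed.

Lemma degC_ge (C : {set 'I_n}) (m : 'X_{1..n}) j : j \in C -> (m j <= degC C m)%N.
Proof. by move=> jC; rewrite /degC (bigD1 j) //= leq_addr. Qed.

Lemma W0 C h : W C 0 h.
Proof. by []. Qed.

Lemma W_ideal C d : is_ideal (W C d).
Proof.
split; first by move=> m; rewrite mcoeff0 eqxx.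
split.
  move=> a b Ha Hb m; rewrite mcoeffD => H.
  case: (eqVneq (a@_m) 0) => [a0|/Ha //]; apply: Hb.
  by move: H; rewrite a0 add0r.
move=> r a Ha m; rewrite -mcoeff_msupp => /msuppM_le /allpairsP [[m1 m2] /= [_ H2 ->]].
rewrite degCD; apply: leq_trans (leq_addl _ _); apply: Ha.
by rewrite -mcoeff_msupp.
Qed.

Lemma W_mul C a b x y : W C a x -> W C b y -> W C (a + b) (x * y).
Proof.
move=> Hx Hy m; rewrite -mcoeff_msupp => /msuppM_le /allpairsP [[m1 m2] /= [H1 H2 ->]].
rewrite degCD leq_add //; [apply: Hx | apply: Hy]; by rewrite -mcoeff_msupp.
Qed.

Lemma W_le C a b x : (a <= b)%N -> W C b x -> W C a x.
Proof. by move=> ab H m /H; apply: leq_trans. Qed.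

Lemma W_Xm C d m : (d <= degC C m)%N -> W C d 'X_[m].
Proof.
move=> H m'; rewrite mcoeffX; case: (eqVneq m m') => [<-|_] //.
by rewrite eqxx.
Qed.

Lemma W_X C j : j \in C -> W C 1 'X_j.
Proof. by move=> jC; apply: W_Xm; apply: leq_trans (degC_ge _ jC); rewrite mnm1E eqxx. Qed.

Lemma W_Xn C j k : j \in C -> W C k ('X_j ^+ k).
Proof.
move=> jC; elim: k => [|k IH]; first exact: W0.
by rewrite exprS -add1n; apply: W_mul => //; apply: W_X.
Qed.

Lemma monomial_crit (J : R -> Prop) h : is_ideal J ->
  (forall m, h@_m != 0 -> J 'X_[m]) -> J h.
Proof.
move=> HJ H; rewrite (mpolyE h); apply: ideal_sum => // m; rewrite mcoeff_msupp => /H Hm.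
by rewrite -mul_mpolyC; case: HJ => _ [_ JM]; apply: JM.
Qed.

Definition trunc (A : pred 'X_{1..n}) (h : R) : R :=
  \sum_(m <- msupp h | A m) h@_m *: 'X_[m].

Lemma trunc_coef A h k : (trunc A h)@_k = if A k then h@_k else 0.
Proof.
have E : h@_k = \sum_(i <- msupp h) h@_i * (i == k)%:R.
  rewrite {1}(mpolyE h) raddf_sum /=; apply: eq_bigr => i _.
  by rewrite mcoeffZ mcoeffX.
rewrite /trunc raddf_sum /= big_mkcond /= E.
have -> : (if A k then \sum_(i <- msupp h) h@_i * (i == k)%:R else 0)
   = \sum_(i <- msupp h) (if A k then h@_i * (i == k)%:R else 0).
  by case: (A k) => //=; rewrite big1.
apply: eq_bigr => m _; rewrite mcoeffZ mcoeffX.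
by case: (eqVneq m k) => [->|_]; rewrite ?mulr0 ?if_same.
Qed.

Lemma trunc_nz A h k : (trunc A h)@_k != 0 -> A k /\ h@_k != 0.
Proof. by rewrite trunc_coef; case: (A k) => //; rewrite eqxx. Qed.

Lemma trunc_rest C d h : W C d h -> W C d.+1 (h - trunc (fun m => degC C m == d) h).
Proof.
move=> Hh m; rewrite mcoeffB trunc_coef.
case: (eqVneq (degC C m) d) => [_|ne]; first by rewrite subrr eqxx.
rewrite subr0 => /Hh; rewrite leq_eqVlt => /orP [/eqP E|//].
by rewrite E eqxx in ne.
Qed.

Lemma primary C k g f : ~ W C 1 g -> W C k (g * f) -> W C k f.
Proof.
move=> Hg Hgf; apply: NNPP => Hf.
have [m0 [fm0 lt0]] : exists m, f@_m != 0 /\ (degC C m < k)%N.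
  apply: NNPP => H; apply: Hf => m fm; rewrite leqNgt; apply/negP => lt.
  by apply: H; exists m.
have ex : exists d, has (fun m => degC C m == d) (msupp f).
  by exists (degC C m0); apply/hasP; exists m0; rewrite ?mcoeff_msupp.
case: (ex_minnP ex) => d /hasP [md mdin /eqP mdd] dmin.
have dk : (d < k)%N.
  apply: leq_ltn_trans lt0; apply: dmin; apply/hasP; exists m0 => //.
  by rewrite mcoeff_msupp.
have Wd : W C d f.
  move=> m fm; apply: dmin; apply/hasP; exists m => //; by rewrite mcoeff_msupp.
have [mg [gmg dmg]] : exists m, g@_m != 0 /\ degC C m = 0%N.
  apply: NNPP => H; apply: Hg => m gm; rewrite lt0n; apply/negP => /eqP E.
  by apply: H; exists m.
set f0 := trunc (fun m => degC C m == d) f.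
set g0 := trunc (fun m => degC C m == 0%N) g.
have Wf1 := trunc_rest Wd.
have Wg1 := trunc_rest (@W0 C g).
have f0nz : f0 != 0.
  apply/eqP => E; move: mdin; rewrite mcoeff_msupp => /eqP; apply.
  have := trunc_coef (fun m => degC C m == d) f md; rewrite -/f0 E mcoeff0 mdd eqxx.
  by move=> ->.
have g0nz : g0 != 0.
  apply/eqP => E; move/eqP: gmg; apply.
  have := trunc_coef (fun m => degC C m == 0%N) g mg; rewrite -/g0 E mcoeff0 dmg eqxx.
  by move=> ->.
have Eid : g0 * f0 = g * f - g0 * (f - f0) - (g - g0) * f.
  by ring.
have HW : W C d.+1 (g0 * f0).
  have [W0' [WD WM]] := W_ideal C d.+1.
  have A1 : W C d.+1 (g * f) by exact: W_le dk Hgf.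
  have A2 : W C d.+1 (- (g0 * (f - f0))).
    by apply: ideal_opp (W_ideal _ _) _; rewrite -[d.+1]add0n; exact (W_mul (@W0 C g0) Wf1).
  have A3 : W C d.+1 (- ((g - g0) * f)).
    by apply: ideal_opp (W_ideal _ _) _; rewrite -add1n; exact (W_mul Wg1 Wd).
  by rewrite Eid; apply: (WD) => //; apply: (WD).
have nz : g0 * f0 != 0 by rewrite mulf_neq0.
have := mlead_supp nz => /[dup] Hin /msuppM_le /allpairsP [[m1 m2] /= [H1 H2 E]].
move: H1 H2; rewrite !mcoeff_msupp => /trunc_nz [/eqP D1 _] /trunc_nz [/eqP D2 _].
rewrite mcoeff_msupp in Hin.
have := HW _ Hin; rewrite E degCD D1 D2 add0n ltnn; by [].
Qed.

End Mono.



Section Comb.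
Variable n : nat.
Implicit Types (C S : {set 'I_n}) (j : 'I_n) (m : 'X_{1..n}).

Definition NN := (n - 2)%N.
Definition cov (i : nat) S : bool :=
  [forall x : 'I_n, ((x < i) && (x < NN))%N ==> [exists y in S, (x <= y <= x + 2)%N]].

Lemma covT i : cov i setT.
Proof.
apply/forallP => x; apply/implyP => _; apply/existsP; exists x; rewrite in_setT /=.
by rewrite leqnn leq_addr.
Qed.

Lemma cov_mono i i' S : (i' <= i)%N -> cov i S -> cov i' S.
Proof.
move=> le /forallP H; apply/forallP => x; apply/implyP => /andP [xi xN].
by have := H x; rewrite xN andbT (leq_trans xi le).
Qed.

Variable m : 'X_{1..n}.

Definition Sopt i := arg_min setT (cov i) (fun S => degC S m).
Definition D i := degC (Sopt i) m.

Lemma D_cov i : cov i (Sopt i).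
Proof. by rewrite /Sopt; case: arg_minnP => //; exact: covT. Qed.

Lemma D_min i S : cov i S -> (D i <= degC S m)%N.
Proof. by rewrite /D /Sopt; case: arg_minnP => [|S0 _ H]; [exact: covT|exact: H]. Qed.

Lemma D0 : D 0 = 0%N.
Proof.
apply/eqP; rewrite -leqn0; apply: leq_trans (D_min (S := set0) _) _.
  by apply/forallP => x.
by rewrite /degC big_set0.
Qed.

Lemma D_mono : {homo D : a b / (a <= b)%N}.
Proof. by move=> a b ab; apply: D_min; apply: cov_mono ab (D_cov b). Qed.

Lemma D_step j : (D (minn NN j.+1) <= D (minn NN (j - 2)) + m j)%N.
Proof.
set a := minn NN (j - 2); set b := minn NN j.+1.
apply: leq_trans (D_min (S := j |: Sopt a) _) _.
  apply/forallP => x; apply/implyP => /andP [xb xN].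
  case: (ltnP x a) => xa.
    have := forallP (D_cov a) x; rewrite xa xN /= => /existsP [y /andP [yS H]].
    by apply/existsP; exists y; rewrite in_setU1 yS orbT H.
  apply/existsP; exists j; rewrite setU11 /=.
  rewrite /a /b in xa xb; apply/andP; split; lia.
rewrite /D; case: (boolP (j \in Sopt a)) => jS.
  have -> : j |: Sopt a = Sopt a.
    by apply/setP => y; rewrite in_setU1; case: eqP => // ->.
  exact: leq_addr.
by rewrite /degC big_setU1 //= addnC.
Qed.

Definition u (i : nat) : 'X_{1..n} := [multinom ((i <= j) && (j <= i + 2))%N : nat | j < n].

Fixpoint G (i : nat) : 'X_{1..n} :=
  if i is i'.+1 then (G i' + u i' *+ (D i'.+1 - D i'))%MM else 0%MM.

Lemma G_coord i j : G i j = (D (minn i j.+1) - D (minn i (j - 2)))%N.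
Proof.
elim: i => [|i IH] /=; first by rewrite mnm0E !min0n subnn.
rewrite mnmDE mulmnE mnmE IH.
have M1 := @D_mono (j - 2) i; have M2 := @D_mono i i.+1.
case: (boolP (i < j - 2)) => h1.
  have E11 : (i <= j) && (j <= i + 2) = false by apply/negbTE; apply/negP => /andP [_]; lia.
    rewrite ?E11.
have E1 : minn i j.+1 = i by lia.
  rewrite ?E1.
  have E2 : minn i (j - 2) = i by lia.
  rewrite ?E2.
  have E3 : minn i.+1 j.+1 = i.+1 by lia.
  rewrite ?E3.
  have E4 : minn i.+1 (j - 2) = i.+1 by lia.
  rewrite ?E4.
  by rewrite !subnn.
case: (boolP (i <= j)) => h2.
  have E12 : (i <= j) && (j <= i + 2) = true by apply/andP; split; lia.
    rewrite ?E12.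
have E5 : minn i j.+1 = i by lia.
  rewrite ?E5.
  have E6 : minn i (j - 2) = (j - 2)%N by lia.
  rewrite ?E6.
  have E7 : minn i.+1 j.+1 = i.+1 by lia.
  rewrite ?E7.
  have E8 : minn i.+1 (j - 2) = (j - 2)%N by lia.
  rewrite ?E8.
  have h1' : (j - 2 <= i)%N by lia.
  have := M1 h1'; have := M2 (leqnSn i); lia.
have E13 : (i <= j) && (j <= i + 2) = false by apply/negbTE; apply/negP => /andP [h3 _]; lia.
  rewrite ?E13.
have -> : minn i j.+1 = j.+1 by lia.
have -> : minn i (j - 2) = (j - 2)%N by lia.
have -> : minn i.+1 j.+1 = j.+1 by lia.
have -> : minn i.+1 (j - 2) = (j - 2)%N by lia.
by rewrite mul0n addn0.
Qed.

Lemma G_le : (G NN <= m)%MM.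
Proof.
apply/mnm_lepP => j; rewrite G_coord leq_subLR; exact: D_step.
Qed.

End Comb.


Section Dual.
Variable K : fieldType.
Variable n : nat.
Local Notation R := {mpoly K[n]}.
Local Notation L := (path2_ideal K n).
Implicit Types (C S : {set 'I_n}) (j : 'I_n) (m : 'X_{1..n}).

Lemma prod_nseq (x : R) k : (\prod_(a <- nseq k x) a = x ^+ k)%R.
Proof. by elim: k => [|k IH]; rewrite ?big_nil ?expr0 // big_cons IH exprS. Qed.

Lemma u_gen i : (i < NN n)%N -> L ('X_[u n i] : R).
Proof.
move=> iN; apply: span_gen.
have h0 : (i < n)%N by rewrite /NN in iN; lia.
have h1 : (i.+1 < n)%N by rewrite /NN in iN; lia.
have h2 : (i.+2 < n)%N by rewrite /NN in iN; lia.
exists (Ordinal h0), (Ordinal h1), (Ordinal h2); split => //; split => //.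
rewrite -!mpolyXD; congr 'X_[_]; apply/mnmP => x.
rewrite !mnmDE !mnm1E mnmE -!val_eqE /=.
case: (boolP (i <= x)%N) => a; case: (boolP (x <= i + 2)%N) => b;
  case: (eqVneq i x) => c; case: (eqVneq i.+1 x) => d; case: (eqVneq i.+2 x) => e /=; lia.
Qed.

Lemma G_prod m i : (i <= NN n)%N -> exists s : seq R, size s = D m i /\
  (forall a, a \in s -> L a) /\ 'X_[G m i] = (\prod_(a <- s) a)%R.
Proof.
elim: i => [|i IH] iN.
  by exists [::]; rewrite D0 big_nil /= mpolyX0.
have [s [sz [Hs E]]] := IH (ltnW iN).
exists (s ++ nseq (D m i.+1 - D m i) 'X_[u n i]); split.
  by rewrite size_cat size_nseq sz subnKC // D_mono.
split.
  move=> a; rewrite mem_cat => /orP [/Hs //|]; rewrite mem_nseq => /andP [_ /eqP ->].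
  exact: u_gen.
by rewrite big_cat /= -E prod_nseq mpolyXn -mpolyXD.
Qed.

Definition pcover S := cov (NN n) S.

Lemma duality m k : (forall C, pcover C -> (k <= degC C m)%N) ->
  ideal_pow L k ('X_[m] : R).
Proof.
move=> H; have [s [sz [Hs E]]] := G_prod m (leqnn (NN n)).
have -> : m = (G m (NN n) + (m - G m (NN n)))%MM by rewrite addmC submK // G_le.
rewrite mpolyXD E; apply: ideal_mulr; first exact: span_ideal.
apply: pow_take Hs; rewrite sz; apply: H; exact: D_cov.
Qed.

End Dual.


Section Main.
Variable K : fieldType.
Variable n : nat.
Local Notation R := {mpoly K[n]}.
Local Notation L := (path2_ideal K n).
Implicit Types (C S : {set 'I_n}) (j : 'I_n) (m : 'X_{1..n}).

Lemma cover_L C (h : R) : pcover C -> L h -> W C 1 h.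
Proof.
move=> cC; apply: span_sub; first exact: W_ideal.
move=> x [i [j [l [ej [el ->]]]]].
rewrite /= in ej el.
have iN : (i < NN n)%N by rewrite /NN; have := ltn_ord l; lia.
have := forallP cC i; rewrite iN /= => /existsP [y /andP [yC /andP [y1 y2]]].
have [E|[E|E]] : y = i \/ y = j \/ y = l.
  have : (y = i :> nat \/ y = j :> nat \/ y = l :> nat) by lia.
  by case=> [/val_inj|[/val_inj|/val_inj]]; auto.
- by subst; rewrite -mulrA; apply: (@ideal_mulr _ (W C 1)); [exact: W_ideal|exact: W_X].
- subst; rewrite [X in (X * _)%R]mulrC; apply: (@ideal_mulr _ (W C 1)); first exact: W_ideal.
  by apply: (@ideal_mulr _ (W C 1)); [exact: W_ideal|exact: W_X].
- by subst; rewrite mulrC; apply: (@ideal_mulr _ (W C 1)); [exact: W_ideal|exact: W_X].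
Qed.

Lemma prodW C (s : seq R) : pcover C -> (forall a, a \in s -> L a) ->
  W C (size s) (\prod_(a <- s) a)%R.
Proof.
move=> cC; elim: s => [|a s IH] Hs; first exact: W0.
rewrite big_cons /= -add1n; apply: W_mul.
  by apply: cover_L => //; apply: Hs; rewrite inE eqxx.
by apply: IH => b Hb; apply: Hs; rewrite inE Hb orbT.
Qed.

Lemma pow_char k (h : R) : ideal_pow L k h <-> (forall C, pcover C -> W C k h).
Proof.
split.
  move=> Hh C cC; move: h Hh; apply: span_sub; first exact: W_ideal.
  by move=> x [s [sz [Hs ->]]]; rewrite -sz; apply: prodW.
move=> H; apply: monomial_crit; first exact: span_ideal.
move=> m hm; apply: duality => C cC; exact: H.
Qed.

Lemma pow1 (h : R) : ideal_pow L 1 h -> L h.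
Proof.
apply: span_sub; first exact: span_ideal.
by move=> x [[|a [|b s]] [//= _ [Hs ->]]]; rewrite big_seq1; apply: Hs; rewrite inE.
Qed.

Lemma L_char (h : R) : L h <-> (forall C, pcover C -> W C 1 h).
Proof.
split; first by move=> Hh C cC; apply: cover_L.
by move/pow_char; apply: pow1.
Qed.

End Main.


Theorem corollary2p4 (K : fieldType) (n : nat) (hn : (3 <= n)%N) :
  normally_torsion_free (path2_ideal K n).
Proof.
move=> k k1 P [Pprime [f Hf]].
have [[P0 [PD PM]] [P1 Pmul]] := Pprime.
pose Good C := pcover C /\ (forall g, W C k (g * f)%R -> P g).
have exGood : exists C, Good C.
  apply: NNPP => H.
  have bad : forall C, pcover C -> exists g, W C k (g * f)%R /\ ~ P g.
    move=> C cC; apply: NNPP => H2; apply: H; exists C; split => // g Wg.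
    by apply: NNPP => Pg; apply: H2; exists g.
  have key : forall cs : seq {set 'I_n}, (forall C, C \in cs -> pcover C) ->
      exists g, ~ P g /\ forall C, C \in cs -> W C k (g * f)%R.
    elim=> [|C cs IH] Hcs; first by exists 1%R; split => // C.
    have [g [ng Wg]] := IH (fun C' H' => Hcs C' (ltac:(by rewrite inE H' orbT))).
    have [g1 [Wg1 ng1]] := bad C (Hcs C (mem_head _ _)).
    exists (g1 * g)%R; split; first by move/Pmul => [].
    move=> C'; rewrite inE => /orP [/eqP ->|HC'].
      by rewrite mulrAC; apply: (@ideal_mulr _ (W C k)) => //; exact: W_ideal.
    by rewrite -mulrA; exact (proj2 (proj2 (@W_ideal _ _ C' k)) g1 _ (Wg C' HC')).
  have [g [ng Wg]] : exists g, ~ P g /\ forall C, C \in [seq C <- enum {set 'I_n} | pcover C] -> W C k (g * f)%R.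
    by apply: key => C; rewrite mem_filter => /andP [].
  apply: ng; apply/Hf; apply/pow_char => C cC; apply: Wg.
  by rewrite mem_filter cC mem_enum.
have minGood : forall c (C : {set 'I_n}), (#|C| <= c)%N -> Good C -> exists C0, Good C0 /\
    forall C' : {set 'I_n}, pcover C' -> C' \subset C0 -> C' = C0.
  elim=> [|c IH] C cardC GC;
    (case: (boolP [exists C' : {set 'I_n}, pcover C' && (C' \proper C)]) => [/existsP [C' /andP [cC' prC']]|nex];
     last by exists C; split => // C' cC' sub; apply/eqP; apply: contraNT nex => ne;
       apply/existsP; exists C'; rewrite cC' properEneq ne sub).
    by have := proper_card prC'; rewrite leqn0 in cardC; rewrite (eqP cardC).
  apply: (IH C'); first by have := proper_card prC'; lia.
  split => // g Wg; apply: GC.2 => m /Wg H; apply: leq_trans H _.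
  by apply: degC_sub; apply: proper_sub.
have [C1 GC1] := exGood.
have [C [[cC GC] minC]] := minGood _ _ (leqnn _) GC1.
have HPW : forall g, P g <-> W C k (g * f)%R.
  move=> g; split; last exact: GC.
  by move/Hf/pow_char; apply.
have PQ : forall g, P g <-> W C 1 g.
  move=> g; split.
    move/HPW => Wg; apply: NNPP => nW; apply: P1; apply/HPW; rewrite mul1r.
    exact: primary nW Wg.
  move=> Wg; apply: monomial_crit => // m /Wg dm.
  have [j [jC mj]] : exists j, j \in C /\ (0 < m j)%N.
    apply: NNPP => H; move: dm; rewrite /degC big1 // => j jC.
    by apply/eqP; rewrite -leqn0 leqNgt; apply/negP => mj; apply: H; exists j.
  have -> : m = ((m - U_(j)) + U_(j))%MM.
    by rewrite submK //; apply/mnm_lepP => x; rewrite mnm1E; case: eqP => // <-.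
  rewrite mpolyXD; apply: PM.
  apply: (@prime_pow _ P 'X_j k Pprime); apply/HPW.
  exact (@ideal_mulr _ (W C k) ('X_j ^+ k) f (@W_ideal _ _ C k) (@W_Xn _ _ C j k jC)).
split => //.
pose mc : 'X_{1..n} := [multinom (j \notin C) : nat | j < n].
have Emc : forall j, mc j = (j \notin C) :> nat by move=> j; rewrite mnmE.
have dmc : degC C mc = 0%N.
  by rewrite /degC big1 // => j jC; rewrite Emc jC.
exists 'X_[mc] => h; split.
  move/PQ => Wh; apply/L_char => C' cC'.
  case: (boolP [exists j in C', j \notin C]) => [/existsP [j /andP [jC' jC]]|nex].
    have WX : W (K:=K) C' 1 'X_[mc].
      have H1 : (1 <= degC C' mc)%N by apply: leq_trans (degC_ge _ jC'); rewrite Emc jC.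
      exact (W_Xm (K:=K) H1).
    exact (proj2 (proj2 (@W_ideal _ _ C' 1)) h _ WX).
  have sub : C' \subset C.
    apply/subsetP => j jC'; apply: contraNT nex => jC; apply/existsP; exists j.
    by rewrite jC' jC.
  rewrite (minC C' cC' sub).
  exact (@ideal_mulr _ (W C 1) h 'X_[mc] (@W_ideal _ _ C 1) Wh).
move/L_char => /(_ C cC) Wh; apply/PQ => m hm.
have := Wh (mc + m)%MM; rewrite mcoeffMX => /(_ hm).
by rewrite degCD dmc.
Qed.
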